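(* Let $n\ge 2$ and let $e_1,\dots,e_k\in\mathbb{C}^{n\times n}$ be an anticommuting family of nilpotent matrices with $e_1^2,\dots,e_k^2\neq0$. Then $k\le 2(n-2)$.
   Context: A family $e_1,\dots,e_k$ of complex $n\times n$ matrices is called anticommuting if $e_ie_j=-e_je_i$ for all distinct $i,j\in\{1,\dots,k\}$. *)

(* Defs.v *)
From HB Require Import structures.
From mathcomp Require Import all_boot all_order all_algebra.
Set Implicit Arguments. Unset Strict Implicit. Unset Printing Implicit Defensive.
Import GRing.Theory Num.Theory.
Local Open Scope ring_scope.

(* m-th power of a square matrix via matrix multiplication (works for any n,
   including n = 0, where 'M_n has no ring structure). *)
Definition mxpow (R : pzRingType) (n : nat) (A : 'M[R]_n) (m : nat) : 'M[R]_n :=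
  iter m (fun B => A *m B) 1%:M.

Definition nilpotent_mx (R : pzRingType) (n : nat) (A : 'M[R]_n) : Prop :=
  exists m : nat, mxpow A m = 0.

Definition anticommuting (R : pzRingType) (n k : nat) (e : 'I_k -> 'M[R]_n) : Prop :=
  forall i j : 'I_k, i != j -> e i *m e j = - (e j *m e i).

(* Main.v *)
Require Import Defs.
From HB Require Import structures.
From mathcomp Require Import all_boot all_order all_algebra.
From mathcomp Require Import zify.
Import GRing.Theory Num.Theory.
Local Open Scope ring_scope.

Lemma mxpowSr (R : pzRingType) n (A : 'M[R]_n) m :
  mxpow A m.+1 = mxpow A m *m A.
Proof.
elim: m => [|m IH]; first by rewrite /mxpow /= mulmx1 mul1mx.
have -> : mxpow A m.+2 = A *m mxpow A m.+1 by [].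
by rewrite {1}IH mulmxA.
Qed.

Lemma maxpow (R : pzRingType) n (A P : 'M[R]_n) N :
  mxpow A N *m P = 0 -> P != 0 ->
  exists m, mxpow A m *m P != 0 /\ A *m (mxpow A m *m P) = 0.
Proof.
elim: N P => [|N IH] P HN HP.
  by move: HN; rewrite /mxpow /= mul1mx => HN; rewrite HN eqxx in HP.
case: (eqVneq (A *m P) 0) => HAP.
  by exists 0%N; rewrite /mxpow /= mul1mx.
have [|m [H1 H2]] := IH (A *m P) _ HAP.
  by rewrite mulmxA -mxpowSr.
by exists m.+1; rewrite mxpowSr -mulmxA.
Qed.

Lemma mx_nz_entry (R : nzRingType) m n (A : 'M[R]_(m,n)) :
  A != 0 -> exists i j, A i j != 0.
Proof.
move=> HA; case: (pickP (fun ij : 'I_m * 'I_n => A ij.1 ij.2 != 0)) => [[i j] H|H].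
  by exists i, j.
case/eqP: HA; apply/matrixP => i j; rewrite mxE.
by move: (H (i, j)) => /= /negbFE/eqP.
Qed.

Lemma sign_sq (R : pzRingType) (b : bool) m :
  (if b then 1 else (-1) ^+ m) * (if b then 1 else (-1) ^+ m) = 1 :> R.
Proof. by case: b; rewrite ?mulr1 // -exprMn_comm ?mulrNN ?mulr1 ?expr1n //; exact: commrN. Qed.

Lemma pow_anti (C : numClosedFieldType) n k (e : 'I_k -> 'M[C]_n) :
  anticommuting e -> forall i j m,
  mxpow (e i) m *m e j = (if i == j then 1 else (-1) ^+ m) *: (e j *m mxpow (e i) m).
Proof.
move=> He i j m; case: eqVneq => [<-|Hij].
  by rewrite scale1r -mxpowSr.
elim: m => [|m IH]; first by rewrite /mxpow /= expr0 scale1r mul1mx mulmx1.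
have -> : mxpow (e i) m.+1 = e i *m mxpow (e i) m by [].
rewrite -mulmxA IH -scalemxAr mulmxA He.
  by rewrite mulNmx -mulmxA exprS mulN1r scaleNr scalerN opprK.
by rewrite eq_sym.
Qed.

Lemma pow_anti' (C : numClosedFieldType) n k (e : 'I_k -> 'M[C]_n) :
  anticommuting e -> forall i j m,
  e j *m mxpow (e i) m = (if i == j then 1 else (-1) ^+ m) *: (mxpow (e i) m *m e j).
Proof.
by move=> He i j m; rewrite pow_anti // scalerA sign_sq scale1r.
Qed.

Lemma greedy (C : numClosedFieldType) n k (e : 'I_k.+1 -> 'M[C]_n) :
  anticommuting e -> (forall i, nilpotent_mx (e i)) -> e ord0 != 0 ->
  forall s : seq 'I_k.+1, exists P : 'M[C]_n,
    [/\ P != 0, (forall j, exists c : C, P *m e j = c *: (e j *m P)),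
        (exists Z, P = e ord0 *m Z) & (forall j, j \in s -> e j *m P = 0)].
Proof.
move=> He Hnil H0; elim=> [|i s [P [HP HPc [Z HZ] Hs]]].
  exists (e ord0); split => //.
  - move=> j; case: (eqVneq (ord0 : 'I_k.+1) j) => [<-|Hj].
      by exists 1; rewrite scale1r.
    by exists (-1); rewrite He // scaleN1r.
  - by exists 1%:M; rewrite mulmx1.
have [N HN] := Hnil i.
have HN' : mxpow (e i) N *m P = 0 by rewrite HN mul0mx.
have [m [Hm1 Hm2]] := @maxpow _ _ _ _ _ HN' HP.
exists (mxpow (e i) m *m P); split => //.
- move=> j; have [c Hc] := HPc j.
  exists (c * (if i == j then 1 else (-1) ^+ m)).
  by rewrite -mulmxA Hc -scalemxAr mulmxA pow_anti // -!scalemxAl scalerA mulmxA.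
- exists ((if i == ord0 then 1 else (-1) ^+ m) *: (mxpow (e i) m *m Z)).
  by rewrite HZ mulmxA pow_anti // -scalemxAl -scalemxAr mulmxA.
- move=> j; rewrite inE => /orP [/eqP ->|Hj] //.
  by rewrite mulmxA pow_anti' // -scalemxAl -mulmxA Hs // mulmx0 scaler0.
Qed.

Lemma avoid_seq (F : numFieldType) p n (s : seq 'M[F]_(p,n)) :
  all (fun B => B != 0) s -> exists v : 'cV[F]_n, all (fun B => B *m v != 0) s.
Proof.
elim: s => [|a s IH] /=; first by exists 0.
case/andP=> a0 /IH [v Hv].
have [u au] : exists u : 'cV[F]_n, a *m u != 0.
  have [x [y Hxy]] := @mx_nz_entry _ _ _ _ a0.
  exists (delta_mx y 0); rewrite -colE; apply/eqP => /matrixP /(_ x 0).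
  by rewrite !mxE; apply/eqP.
case: (pickP (fun t : 'I_(size s).+2 =>
   all (fun B => B *m (v + (t:nat)%:R *: u) != 0) (a :: s))) => [t Ht|Hno].
  by exists (v + (t:nat)%:R *: u); exact: Ht.
exfalso.
pose Q (t : 'I_(size s).+2) := (fun B : 'M[F]_(p,n) => B *m (v + (t:nat)%:R *: u) == 0).
have hasf t : has (Q t) (a :: s).
  have /allPn [B HB /negPn HB0] := negbT (Hno t).
  by apply/hasP; exists B.
pose f (t : 'I_(size s).+2) : 'I_(size s).+1 := inord (find (Q t) (a :: s)).
have finj : injective f.
  move=> t1 t2 /(congr1 val) /=.
  rewrite !inordK -?[(_ < (size s).+1)%N]/(_ < size (a :: s))%N -?has_find //.
  move=> Heq; apply/val_inj/eqP; apply: contraT => Hne.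
  set B := nth 0 (a :: s) (find (Q t1) (a :: s)).
  have HB1 : B *m (v + (t1:nat)%:R *: u) = 0 by apply/eqP; exact: (nth_find 0 (hasf t1)).
  have HB2 : B *m (v + (t2:nat)%:R *: u) = 0.
    by apply/eqP; rewrite /B Heq; exact: (nth_find 0 (hasf t2)).
  have HBin : B \in a :: s by rewrite /B mem_nth // -has_find.
  have Hu : B *m u = 0.
    have : ((t1:nat)%:R - (t2:nat)%:R) *: (B *m u) = 0.
      move: HB1 HB2; rewrite !mulmxDr -!scalemxAr => HB1 HB2.
      have E1 : (t1:nat)%:R *: (B *m u) = - (B *m v) by apply/eqP; rewrite -addr_eq0 addrC HB1.
      have E2 : (t2:nat)%:R *: (B *m u) = - (B *m v) by apply/eqP; rewrite -addr_eq0 addrC HB2.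
      by rewrite scalerBl E1 E2 subrr.
    move/eqP; rewrite scaler_eq0 subr_eq0 eqr_nat (negbTE Hne) /=.
    by move/eqP.
  have Hv0 : B *m v = 0 by move: HB1; rewrite mulmxDr -scalemxAr Hu scaler0 addr0.
  move: HBin; rewrite inE => /orP [/eqP HBa|HBs].
    by move: au; rewrite -HBa Hu eqxx.
  by move/allP: Hv => /(_ B HBs); rewrite Hv0 eqxx.
by move: (leq_card f finj); rewrite !card_ord ltnn.
Qed.

Lemma m11 (R : nzRingType) (M : 'M[R]_1) : M != 0 -> M 0 0 != 0.
Proof.
move=> HM; apply: contra HM => /eqP H; apply/eqP/matrixP => i j; by rewrite !ord1 H mxE.
Qed.

Theorem claim1 (C : numClosedFieldType) (n k : nat) (e : 'I_k -> 'M[C]_n) :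
  (2 <= n)%N ->
  anticommuting e ->
  (forall i, nilpotent_mx (e i)) ->
  (forall i, e i *m e i != 0) ->
  (k <= 2 * (n - 2))%N.
Proof.
move=> Hn.
case: k e => [|k] e He Hnil Hsq; first by [].
have H0 : e ord0 != 0 by apply: contraNneq (Hsq ord0) => ->; rewrite mul0mx.
have [P [HP HPc [Z HZ] Hs]] := @greedy _ _ _ _ He Hnil H0 (enum 'I_k.+1).
have HeP j : e j *m P = 0 by apply: Hs; rewrite mem_enum.
have HPe j : P *m e j = 0 by have [c ->] := HPc j; rewrite HeP scaler0.
have HPP : P *m P = 0 by rewrite {2}HZ mulmxA HPe mul0mx.
have [a [b Hab]] := @mx_nz_entry _ _ _ _ HP.
pose yr := row a P. pose uc := col b P.
have [v Hv] : exists v : 'cV[C]_n, forall i, e i *m e i *m v != 0.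
  have [|v Hv] := @avoid_seq C n n [seq e i *m e i | i <- enum 'I_k.+1].
    by apply/allP => B /mapP [i _ ->]; exact: Hsq.
  by exists v => i; move/allP: Hv; apply; apply/mapP; exists i; rewrite ?mem_enum.
have [w Hw] : exists w : 'rV[C]_n, forall i, (w *m (e i *m e i *m v)) 0 0 != 0.
  have [|w Hw] := @avoid_seq C 1 n [seq (e i *m e i *m v)^T | i <- enum 'I_k.+1].
    apply/allP => B /mapP [i _ ->]; rewrite trmx_eq0; exact: Hv.
  exists w^T => i; move/allP: Hw => /(_ _ (map_f _ (mem_enum _ i))).
  have -> : w^T *m (e i *m e i *m v) = ((e i *m e i *m v)^T *m w)^T by rewrite trmx_mul trmxK.
  by move/m11 => H; rewrite mxE.
pose R := \matrix_(i < k.+1, c < n) (w *m e i) 0 c.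
pose Cm := \matrix_(c < n, j < k.+1) (e j *m v) c 0.
have RCE i j : (R *m Cm) i j = (w *m e i *m e j *m v) 0 0.
  rewrite -mulmxA !mxE; apply: eq_bigr => c _; rewrite !mxE //.
pose G := R *m Cm + (R *m Cm)^T.
pose d := \row_(i < k.+1) ((w *m e i *m e i *m v) 0 0 *+ 2).
have GE : G = diag_mx d.
  apply/matrixP => i j.
  have -> : G i j = (w *m e i *m e j *m v) 0 0 + (w *m e j *m e i *m v) 0 0.
    by rewrite /G [LHS]mxE [(_^T) i j]mxE !RCE.
  rewrite [RHS]mxE [d 0 i]mxE.
  case: eqVneq => [<-|Hij]; first by rewrite mulr2n.
  have addE (M1 M2 : 'M[C]_(1,1)) : M1 0 0 + M2 0 0 = (M1 + M2) 0 0 by rewrite mxE.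
  rewrite mulr0n addE -!mulmxA -(mulmxDr w) !mulmxA -mulmxDl He // addNr.
  by rewrite mul0mx mulmx0 mxE.
have HG : \rank G = k.+1.
  apply: mxrank_unit; rewrite unitmxE GE det_diag unitfE.
  apply/prodf_neq0 => i _; rewrite mxE mulrn_eq0 /= -!mulmxA.
  by move: (Hw i); rewrite !mulmxA.
have yr0 : yr != 0.
  by apply: contraNneq Hab => H; move: (congr1 (fun M : 'rV[C]_n => M 0 b) H); by rewrite !mxE => ->.
have uc0 : uc != 0.
  by apply: contraNneq Hab => H; move: (congr1 (fun M : 'cV[C]_n => M a 0) H); rewrite !mxE => ->.
have PCm : P *m Cm = 0.
  apply/matrixP => x j; rewrite !mxE.
  have -> : \sum_j0 P x j0 * Cm j0 j = (P *m (e j *m v)) x 0.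
    by rewrite mxE; apply: eq_bigr => c _; rewrite mxE.
  by rewrite mulmxA HPe mul0mx mxE.
have Ruc : R *m uc = 0.
  apply/matrixP => i j; rewrite !ord1 !mxE.
  have -> : \sum_j0 R i j0 * uc j0 0 = ((w *m e i) *m uc) 0 0.
    by rewrite mxE; apply: eq_bigr => c _; rewrite mxE.
  by rewrite -mulmxA /uc colE (mulmxA (e i)) HeP !mul0mx mulmx0 mxE.
have yruc : yr *m uc = 0 by rewrite /yr /uc colE -row_mul mulmxA HPP mul0mx row0.
pose S := kermx yr^T.
have HS : \rank S = (n - 1)%N by rewrite mxrank_ker mxrank_tr rank_rV yr0.
have CS : (Cm^T <= S)%MS by apply/sub_kermxP; rewrite -trmx_mul /yr -row_mul PCm row0 trmx0.
have US : (uc^T <= S)%MS by apply/sub_kermxP; rewrite -trmx_mul yruc trmx0.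
have UK : (uc^T <= kermx R^T)%MS by apply/sub_kermxP; rewrite -trmx_mul Ruc trmx0.
have HRC : (\rank (R *m Cm) <= n - 2)%N.
  rewrite -mxrank_tr trmx_mul.
  apply: (leq_trans (mxrankS (submxMr R^T CS))).
  have := mxrank_mul_ker S R^T.
  have : (1 <= \rank (S :&: kermx R^T))%N.
    have H1 : (uc^T <= S :&: kermx R^T)%MS by rewrite sub_capmx US UK.
    by have := mxrankS H1; rewrite rank_rV trmx_eq0 uc0.
  rewrite HS; move=> H1 H2.
  lia.
have := mxrank_add (R *m Cm) (R *m Cm)^T.
rewrite -/G HG mxrank_tr => H.
lia.
Qed.
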